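(* Let $q\ge1$ and $t\ge0$ be integers. If a code $\mathcal{C}\subseteq\mathcal{S}_{\mathrm{all}}^q$ is a $t$-tail-insertion-detecting code, then it is a $t$-tail-insertion-correcting code.
   Context: Let $[q]=\{0,1,\dots,q-1\}$. For $1\le m\le q$, a partial permutation of length $m$ over $[q]$ is a sequence $\pi=(\pi_1,\dots,\pi_m)$ of $m$ pairwise distinct elements of $[q]$. Let $\mathcal{S}_m^q$ be the set of all partial permutations of length $m$ and $\mathcal{S}_{\mathrm{all}}^q=\bigcup_{m=1}^{q}\mathcal{S}_m^q$. A code is any subset of $\mathcal{S}_{\mathrm{all}}^q$. Juxtaposition $\omega\pi$ denotes concatenation with $\omega$ on the left. For an integer $t\ge0$, $\mathcal{B}_{\mathrm{ins}}^t(\pi)$ is the set of all $\omega\pi\in\mathcal{S}_{\mathrm{all}}^q$ where $\omega$ is a (possibly empty) sequence of at most $t$ elements of $[q]$ (so all entries of $\omega\pi$ are pairwise distinct). A code $\mathcal{C}$ is $t$-tail-insertion-detecting if $\mathcal{C}\cap\mathcal{B}_{\mathrm{ins}}^t(\pi)=\{\pi\}$ for every $\pi\in\mathcal{C}$, and $t$-tail-insertion-correcting if $\mathcal{B}_{\mathrm{ins}}^t(\pi_1)\cap\mathcal{B}_{\mathrm{ins}}^t(\pi_2)=\emptyset$ for all distinct $\pi_1,\pi_2\in\mathcal{C}$. *)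

(* Defs.v *)
From mathcomp Require Import all_boot.
Set Implicit Arguments. Unset Strict Implicit. Unset Printing Implicit Defensive.

(* [q] = {0,...,q-1}; sequences are seq nat with entries < q. *)

Definition is_pperm (q : nat) (pi : seq nat) : Prop :=
  [/\ 1 <= size pi <= q, uniq pi & all (fun x => x < q) pi].

Definition S_all (q : nat) : seq nat -> Prop := is_pperm q.

Definition is_code (q : nat) (C : seq nat -> Prop) : Prop :=
  forall pi, C pi -> S_all q pi.

Definition B_ins (q t : nat) (pi : seq nat) (sigma : seq nat) : Prop :=
  exists omega : seq nat,
    [/\ size omega <= t, all (fun x => x < q) omega,
        sigma = omega ++ pi & S_all q sigma].

Definition tail_ins_detecting (q t : nat) (C : seq nat -> Prop) : Prop :=
  forall pi, C pi -> forall sigma, (C sigma /\ B_ins q t pi sigma) <-> sigma = pi.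

Definition tail_ins_correcting (q t : nat) (C : seq nat -> Prop) : Prop :=
  forall pi1 pi2, C pi1 -> C pi2 -> pi1 <> pi2 ->
    forall sigma, ~ (B_ins q t pi1 sigma /\ B_ins q t pi2 sigma).

(* Main.v *)
Require Import Defs.
From mathcomp Require Import all_boot.

Lemma aux (q t : nat) (C : seq nat -> Prop) pi1 pi2 w1 w2 :
  is_code q C -> tail_ins_detecting q t C -> C pi1 -> C pi2 ->
  size w1 <= size w2 -> size w2 <= t -> all (fun x => x < q) w2 ->
  w1 ++ pi1 = w2 ++ pi2 -> pi1 = pi2.
Proof.
move=> Hc Hd C1 C2 Hs Ht Ha He.
have Hw2 : w2 = take (size w1) w2 ++ drop (size w1) w2 by rewrite cat_take_drop.
rewrite Hw2 -catA in He.
move/eqP: He; rewrite eqseq_cat; last by rewrite size_take_min; apply/esym/minn_idPl.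
case/andP=> _ /eqP E.
apply/(Hd pi2 C2 pi1); split => //.
exists (drop (size w1) w2); split => //.
- by rewrite size_drop; apply: leq_trans (leq_subr _ _) Ht.
- by rewrite -(cat_take_drop (size w1) w2) all_cat in Ha; case/andP: Ha.
- by apply: Hc.
Qed.

Theorem mainTheorem2 (q t : nat) (C : seq nat -> Prop) :
  1 <= q -> is_code q C ->
  tail_ins_detecting q t C -> tail_ins_correcting q t C.
Proof.
move=> _ Hc Hd pi1 pi2 C1 C2 Hne sigma [[w1 [s1 a1 e1 _]] [w2 [s2 a2 e2 _]]].
apply: Hne.
case: (leqP (size w1) (size w2)) => H.
- by apply: (@aux _ _ _ _ _ _ _ Hc Hd C1 C2 H s2 a2); rewrite -e1 -e2.
- apply/esym; apply: (@aux _ _ _ _ _ _ _ Hc Hd C2 C1 (ltnW H) s1 a1); by rewrite -e1 -e2.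
Qed.
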